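(* For all Maya diagrams $\sigma,\sigma'$, \[ \langle\sigma',A(x;t)\sigma\rangle=\sum_{h}\prod_{i\in\mathbb{Z}}\Omega(h_{i-1},\sigma_i,h_i,\sigma'_i), \] where the sum runs over all row configurations $h$ from $\sigma$ to $\sigma'$ and the vertex weights are $\omega_1=\omega_3=\omega_5=1$, $\omega_2=-x$, $\omega_4=tx$, $\omega_6=(t-1)x$.
   Context: Maya diagrams are maps $\sigma:\mathbb{Z}\to\{0,1\}$ with $\sigma_i=1$ for $i\ll0$ and $\sigma_i=0$ for $i\gg0$. $\mathcal{F}(t)$ is the $\mathbb{C}(t)$-space with basis the Maya diagrams, with the bilinear form $\langle\cdot,\cdot\rangle$ making them orthonormal. Operators: $\psi^+_i(t)\sigma=(\sigma+\epsilon_i)\prod_{j>i}(-t)^{\sigma_j}$ if $\sigma_i=0$, else $0$; $\psi^-_i(t)\sigma=(\sigma-\epsilon_i)\prod_{j>i}(-t)^{-\sigma_j}$ if $\sigma_i=1$, else $0$ ($\epsilon_i$ the indicator of $i$); $E_{ij}(t)=(1-t)\psi_i^-(t)\psi_j^+(t)$; $A(x;t)=1+\sum_{r>0}\sum_{i_1<j_1<\cdots<i_r<j_r}(xt)^{j_1-i_1+\cdots+j_r-i_r}E_{i_1j_1}(t)\cdots E_{i_rj_r}(t)$. Six-vertex row configurations: a vertex is a 4-tuple (W,N,E,S) of edge values in $\{0,1\}$; the allowed ones and their weights are $\Omega(0,0,0,0)=\omega_1$, $\Omega(1,1,1,1)=\omega_2$, $\Omega(0,1,0,1)=\omega_3$,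 $\Omega(1,0,1,0)=\omega_4$, $\Omega(1,0,0,1)=\omega_5$, $\Omega(0,1,1,0)=\omega_6$, and $\Omega=0$ for all other tuples. A row configuration from $\sigma$ (top) to $\sigma'$ (bottom) is a map $h:\mathbb{Z}\to\{0,1\}$ ($h_i$ the horizontal edge between vertices $i$ and $i+1$) with $h_i=0$ for all $|i|$ sufficiently large and such that $(h_{i-1},\sigma_i,h_i,\sigma'_i)$ is allowed for every $i$. *)

(* Defs.v *)
From HB Require Import structures.
From mathcomp Require Import all_boot all_order all_algebra.
From mathcomp Require Import boolp classical_sets fsbigop.
Set Implicit Arguments. Unset Strict Implicit. Unset Printing Implicit Defensive.
Import Order.TTheory GRing.Theory Num.Theory.
Local Open Scope ring_scope.
Local Open Scope classical_set_scope.

Definition is_maya (sigma : int -> bool) : Prop :=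
  exists L M : int, (forall i, i < L -> sigma i) /\ (forall i, M < i -> ~~ sigma i).

(* sigma + eps_i and sigma - eps_i (only used where sigma_i = 0, resp. 1). *)
Definition maya_set (sigma : int -> bool) (i : int) : int -> bool :=
  fun j => if j == i then true else sigma j.
Definition maya_unset (sigma : int -> bool) (i : int) : int -> bool :=
  fun j => if j == i then false else sigma j.

Section Fock.
Variable K : fieldType.

(* Elements of F(t) of the form  c * sigma  (a scalar multiple of a basis
   vector); this set is stable under all the operators considered, which map
   basis vectors to scalar multiples of basis vectors. *)
Definition kvec := (K * (int -> bool))%type.

(* <sigma', c * tau> for the bilinear form making Maya diagrams orthonormal *)
Definition pairing (sigma' : int -> bool) (v : kvec) : K :=
  if `[< v.2 = sigma' >] then v.1 else 0.

Definition sign_above (t : K) (sigma : int -> bool) (i : int) : K :=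
  \big[*%R/1]_(j \in [set j : int | i < j]) ((- t) ^+ sigma j).

Definition psi_plus (t : K) (i : int) (v : kvec) : kvec :=
  if v.2 i then (0, v.2)
  else (v.1 * sign_above t v.2 i, maya_set v.2 i).

Definition psi_minus (t : K) (i : int) (v : kvec) : kvec :=
  if v.2 i then (v.1 * (sign_above t v.2 i)^-1, maya_unset v.2 i)
  else (0, v.2).

Definition Eop (t : K) (i j : int) (v : kvec) : kvec :=
  let w := psi_minus t i (psi_plus t j v) in ((1 - t) * w.1, w.2).

Definition interlaced (s : seq (int * int)) : bool :=
  sorted <%R (flatten [seq [:: p.1; p.2] | p <- s]).

Definition Eprod (t : K) (s : seq (int * int)) (v : kvec) : kvec :=
  foldr (fun p w => Eop t p.1 p.2 w) v s.

Definition Eweight (s : seq (int * int)) : nat :=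
  (\sum_(p <- s) `|p.2 - p.1|)%N.

(* <sigma', A(x;t) sigma>, where
   A(x;t) = 1 + sum_{r>0} sum_{i1<j1<...<ir<jr} (xt)^{sum (j-i)} E_{i1j1}...E_{irjr};
   the matrix coefficient is the (finitely supported) sum of the matrix
   coefficients of the individual terms. *)
Definition A_coef (x t : K) (sigma' sigma : int -> bool) : K :=
  pairing sigma' (1, sigma) +
  \sum_(s \in [set s : seq (int * int) | s != [::] /\ interlaced s])
     ((x * t) ^+ Eweight s * pairing sigma' (Eprod t s (1, sigma))).

Definition vertex_allowed (W N E S : bool) : bool :=
  (W, N, E, S) \in [:: (false, false, false, false); (true, true, true, true);
                      (false, true, false, true); (true, false, true, false);
                      (true, false, false, true); (false, true, true, false)].

Definition Omega (w1 w2 w3 w4 w5 w6 : K) (W N E S : bool) : K :=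
  match W, N, E, S with
  | false, false, false, false => w1
  | true, true, true, true => w2
  | false, true, false, true => w3
  | true, false, true, false => w4
  | true, false, false, true => w5
  | false, true, true, false => w6
  | _, _, _, _ => 0
  end.

(* h : Z -> {0,1}, h_i = horizontal edge between vertices i and i+1 *)
Definition row_config (sigma sigma' h : int -> bool) : Prop :=
  (exists N : int, forall i, N < `|i| -> ~~ h i) /\
  (forall i : int, vertex_allowed (h (i - 1)) (sigma i) (h i) (sigma' i)).

Definition row_partition (w1 w2 w3 w4 w5 w6 : K) (sigma sigma' : int -> bool) : K :=
  \sum_(h \in [set h : int -> bool | row_config sigma sigma' h])
    \big[*%R/1]_(i \in [set: int])
      Omega w1 w2 w3 w4 w5 w6 (h (i - 1)) (sigma i) (h i) (sigma' i).

End Fock.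

(* Main.v *)
Require Import Defs.
From HB Require Import structures.
From mathcomp Require Import all_boot all_order all_algebra.
From mathcomp Require Import boolp classical_sets fsbigop.
From mathcomp Require Import functions zify.
Set Implicit Arguments. Unset Strict Implicit. Unset Printing Implicit Defensive.
Import Order.TTheory GRing.Theory Num.Theory.
Local Open Scope ring_scope.

Definition hsf (s : seq (int*int)) (l : int) : bool :=
  has (fun p => (p.1 <= l) && (l < p.2)) s.
Definition Ff (s : seq (int*int)) (l : int) : bool :=
  has (fun p => (l == p.1) || (l == p.2)) s.

Lemma il_cons (x y : int) r : interlaced ((x,y)::r) =
  (x < y) && (if r is q::_ then (y < q.1) && interlaced r else true).
Proof.
case: r => [|[u v] r]; rewrite /interlaced /=; first by rewrite andbT.
by rewrite andbA.
Qed.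

Lemma il_inv (x y : int) r : interlaced ((x,y)::r) ->
  [/\ x < y, interlaced r & forall q, q \in r -> y < q.1].
Proof.
elim: r x y => [|[u v] r IH] x y; rewrite il_cons.
  by rewrite andbT => xy; split.
move=> /andP[xy /andP[/= yu H]]; split => //.
have [uv _ Hr] := IH _ _ H.
move=> q; rewrite inE => /orP[/eqP -> /= //|/Hr h]; exact: lt_trans yu (lt_trans uv h).
Qed.

Lemma il_lt s : interlaced s -> forall q, q \in s -> q.1 < q.2.
Proof.
elim: s => [|[x y] r IH] // /il_inv [xy ir _] q; rewrite inE.
by case/orP => [/eqP -> //|]; apply: IH.
Qed.

Lemma il_after x y r : interlaced ((x,y)::r) ->
  forall l, l <= y -> hsf r l = false /\ Ff r l = false.
Proof.
move=> H; have [xy ir Hr] := il_inv H; have Hl := il_lt ir.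
move=> l ly; split; apply/hasP => -[[u v] qr /=] Hq.
  by have := Hr _ qr => /=; lia.
by have := Hr _ qr; have := Hl _ qr => /=; lia.
Qed.

Lemma il_before x y r : interlaced ((x,y)::r) ->
  forall l, l < x -> hsf ((x,y)::r) l = false /\ Ff ((x,y)::r) l = false.
Proof.
move=> H; have [xy ir Hr] := il_inv H; have Hl := il_lt ir.
move=> l lx; split; apply/hasP => -[[u v] /=]; rewrite inE => /orP[/eqP [-> ->] /=|qr]; try lia.
  by have := Hr _ qr => /=; lia.
by have := Hr _ qr; have := Hl _ qr => /=; lia.
Qed.

Lemma hsf_cons p r l : hsf (p::r) l = ((p.1 <= l) && (l < p.2)) || hsf r l.
Proof. by []. Qed.
Lemma Ff_cons p r l : Ff (p::r) l = ((l == p.1) || (l == p.2)) || Ff r l.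
Proof. by []. Qed.

Lemma BL s : interlaced s -> forall l, hsf s (l-1) (+) hsf s l = Ff s l.
Proof.
elim: s => [|[x y] r IH] // H l.
have [xy ir Hr] := il_inv H.
rewrite !hsf_cons Ff_cons /=.
have [ly|ly] := lerP l y.
  have [h1 f1] := il_after H ly.
  have ly1 : l - 1 <= y by lia.
  have [h2 _] := il_after H ly1.
  rewrite h1 h2 f1 !orbF; lia.
rewrite -IH //.
have -> : (x <= l - 1) && (l - 1 < y) = false by lia.
have -> : (x <= l) && (l < y) = false by lia.
have -> : (l == x) || (l == y) = false by lia.
by [].
Qed.

Lemma VA W N E S : vertex_allowed W N E S =
  if W (+) E then (N == E) && (S == ~~ N) else (N == S).
Proof. by case: W; case: N; case: E; case: S. Qed.

Lemma hsf_inj s1 s2 : interlaced s1 -> interlaced s2 -> hsf s1 =1 hsf s2 -> s1 = s2.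
Proof.
elim: s1 s2 => [|[a b] r1 IH] [|[c d] r2] //.
- move=> _ /il_inv [cd _ _] /(_ c); rewrite hsf_cons /=; lia.
- move=> /il_inv [ab _ _] _ /(_ a); rewrite hsf_cons /=; lia.
move=> H1 H2 E.
have [ab i1 R1] := il_inv H1; have [cd i2 R2] := il_inv H2.
have ac : a = c.
  have [lt|lt|//] := ltgtP a c.
    have [h _] := il_before H2 lt; move: (E a); rewrite h hsf_cons /=; lia.
  have [h _] := il_before H1 lt; move: (E c); rewrite h hsf_cons /=; lia.
subst c.
have bd : b = d.
  have [lt|lt|//] := ltgtP b d.
    have [h _] := il_after H1 (lexx b); move: (E b); rewrite !hsf_cons h /=; lia.
  have [h _] := il_after H2 (lexx d); move: (E d); rewrite !hsf_cons h /=; lia.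
subst d; congr cons; apply: IH => // l.
have [lb|lb] := lerP l b.
  by have [-> _] := il_after H1 lb; have [-> _] := il_after H2 lb.
by move: (E l); rewrite !hsf_cons /=; have -> : (a <= l) && (l < b) = false by lia.
Qed.

Lemma hsf_surj n : forall (a : int) (h : int -> bool),
  (forall l, h l -> (a <= l) && (l < a + n%:Z)) ->
  exists s, [/\ interlaced s, hsf s =1 h & forall q, q \in s -> a <= q.1].
Proof.
elim: n => [|n IH] a h Hh.
  exists [::]; split => // l; apply/esym/negP => /Hh; lia.
pose h' := fun l => h l && (l != a).
have [s' [Hi E' Ha]] : exists s, [/\ interlaced s, hsf s =1 h' & forall q, q \in s -> a + 1 <= q.1].
  apply: IH => l /andP[/Hh]; lia.
case ha : (h a).
  case: s' Hi E' Ha => [|[u v] r] Hi E' Ha.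
    exists [:: (a, a+1)]; split => //=.
    - by rewrite /interlaced /=; lia.
    - move=> l; have := E' l; rewrite /h' /hsf /=.
      by case: (eqVneq l a) => [->|la]; rewrite ?ha ?andbT ?andbF; lia.
    - by move=> q; rewrite inE => /eqP ->.
  have ua := Ha (u,v) (mem_head _ _); rewrite /= in ua.
  have [uv _ _] := il_inv Hi.
  case: (eqVneq u (a+1)) => [eu|nu].
    exists ((a,v)::r); split.
    - by move: Hi; rewrite !il_cons => /andP[_ ->]; rewrite andbT; lia.
    - move=> l; have := E' l; rewrite /h' !hsf_cons /=.
      by case: (eqVneq l a) => [->|la]; rewrite ?ha ?andbT ?andbF; lia.
    - move=> q; rewrite inE => /orP[/eqP -> //=|qr].
      by have := Ha q; rewrite inE qr orbT => /(_ isT); lia.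
  exists ((a,a+1)::(u,v)::r); split.
  - by rewrite il_cons Hi /=; lia.
  - move=> l; have := E' l; rewrite /h' !hsf_cons /=.
    by case: (eqVneq l a) => [->|la]; rewrite ?ha ?andbT ?andbF; lia.
  - move=> q; rewrite inE => /orP[/eqP -> //=|qr].
    by have := Ha q qr; lia.
exists s'; split => //.
- move=> l; rewrite E' /h'; case: (eqVneq l a) => [->|]; by rewrite ?ha ?andbT ?andbF.
- by move=> q /Ha; lia.
Qed.

Lemma row_surj (sg sg' h : int -> bool) : row_config sg sg' h ->
  exists s, interlaced s /\ hsf s = h.
Proof.
move=> [[N HN] _].
have Hs : forall l, h l -> (- N <= l) && (l < - N + (absz (2 * N + 1))%:Z).
  move=> l hl; have : ~~ (N < `|l|) by apply: contraL hl; apply: HN.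
  lia.
have [s [Hi E _]] := hsf_surj Hs.
by exists s; split => //; apply: funext.
Qed.

From mathcomp Require Import ring.
Local Open Scope classical_set_scope.

Section Alg.
Variable K : fieldType.

Lemma WL (F : int -> K) (a : int) (n : nat) :
  (forall l, (l < a) || (a + n%:Z <= l) -> F l = 1) ->
  \big[*%R/1]_(l \in [set: int]) F l = \prod_(k < n) F (a + k%:Z).
Proof.
move=> HF.
rewrite -(big_mkord xpredT (fun k => F (a + k%:Z))).
rewrite -(big_map (fun k : nat => a + k%:Z) xpredT F).
rewrite [RHS]fsbig_seq; last first.
  rewrite map_inj_uniq ?iota_uniq // => u v /= /eqP; lia.
apply/esym; apply: fsbig_widen => // l [_ /= Hl]; rewrite /= HF //.
apply/negP => Hn; apply: Hl; apply/mapP; exists `|l - a|%N.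
  by rewrite mem_iota; lia.
lia.
Qed.

Lemma fsZ_split (G H : int -> K) (a1 b1 a2 b2 : int) :
  (forall l, (l < a1) || (b1 < l) -> G l = 1) ->
  (forall l, (l < a2) || (b2 < l) -> H l = 1) ->
  \big[*%R/1]_(l \in [set: int]) (G l * H l) =
  \big[*%R/1]_(l \in [set: int]) G l * \big[*%R/1]_(l \in [set: int]) H l.
Proof.
move=> HG HH.
pose a := Num.min a1 a2; pose n := absz (Num.max b1 b2 - a + 1).
rewrite !(WL (a := a) (n := n)) ?big_split //.
- move=> l Hl; apply: HH; lia.
- move=> l Hl; apply: HG; lia.
- move=> l Hl; rewrite HG ?HH ?mulr1 //; lia.
Qed.

Variable t : K.
Hypothesis t0 : t != 0.

Lemma Eprod_cons p r v : Eprod t (p::r) v = Eop t p.1 p.2 (Eprod t r v).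
Proof. by []. Qed.

Lemma Eop_valid i j c (tau : int -> bool) : i != j -> tau i -> ~~ tau j ->
  Eop t i j (c, tau) = ((1 - t) * (c * sign_above t tau j *
     (sign_above t (maya_set tau j) i)^-1), maya_unset (maya_set tau j) i).
Proof.
move=> ij ti tj; rewrite /Eop /psi_plus /= (negbTE tj) /psi_minus /=.
by have -> : maya_set tau j i by rewrite /maya_set (negbTE ij).
Qed.

Lemma Eop_zero i j tau : (Eop t i j (0, tau)).1 = 0.
Proof.
rewrite /Eop /psi_plus /psi_minus /=.
by case: (tau j) => /=; case: ifP => /=; rewrite ?mul0r ?mulr0.
Qed.

Lemma Eop_invalid i j c (tau : int -> bool) : i != j -> ~~ (tau i && ~~ tau j) ->
  (Eop t i j (c, tau)).1 = 0.
Proof.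
move=> ij; case tj : (tau j) => /=.
  by move=> _; rewrite /Eop /psi_plus /psi_minus /= tj; case: ifP; rewrite /= ?mul0r ?mulr0.
rewrite andbT => ti; rewrite /Eop /psi_plus /= tj /psi_minus /= /maya_set.
by rewrite (negbTE ij) (negbTE ti) mulr0.
Qed.

Definition Vp s (sg : int -> bool) := forall l, Ff s l -> sg l = hsf s l.

Lemma Vp_cons x y r sg : interlaced ((x,y)::r) ->
  Vp ((x,y)::r) sg <-> [/\ sg x, ~~ sg y & Vp r sg].
Proof.
move=> H; have [xy ir Hr] := il_inv H.
split.
  move=> V; split.
  - by rewrite V !(Ff_cons, hsf_cons) /= ?eqxx //; lia.
  - have [h1 _] := il_after H (lexx y).
    by rewrite V !(Ff_cons, hsf_cons) /= ?eqxx ?h1 ?orbT //; lia.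
  - move=> l Fl; have ly : y < l.
      by rewrite ltNge; apply/negP => /(il_after H) [_]; rewrite Fl.
    by rewrite V !(Ff_cons, hsf_cons) ?Fl ?orbT //=; have -> : (x <= l) && (l < y) = false by lia.
move=> [sx sy V] l; rewrite Ff_cons hsf_cons /=.
case: (eqVneq l x) => [->|lx]; first by rewrite sx; lia.
case: (eqVneq l y) => [->|ly].
  by have [-> _] := il_after H (lexx y); rewrite (negbTE sy); lia.
rewrite /= => Fl; have ly' : y < l.
  by rewrite ltNge; apply/negP => /(il_after H) [_]; rewrite Fl.
by rewrite V //; have -> : (x <= l) && (l < y) = false by lia.
Qed.

Lemma EP s sg : interlaced s ->
  ((Eprod t s (1, sg)).1 != 0 -> Vp s sg) /\
  (Vp s sg -> (Eprod t s (1, sg)).2 = fun l => sg l (+) Ff s l).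
Proof.
elim: s => [|[x y] r IH] H.
  by split => // _; apply: funext => l; rewrite addbF.
have [xy ir Hr] := il_inv H; have [IH1 IH2] := IH ir.
have [_ Fx] := il_after H (ltW xy).
have [_ Fy] := il_after H (lexx y).
have xny : x != y by lia.
rewrite Eprod_cons.
case E : (Eprod t r (1, sg)) => [c tau]; rewrite E /= in IH1 IH2.
split.
  have [->|c0] := eqVneq c 0; first by rewrite Eop_zero eqxx.
  have V := IH1 c0; have Et := IH2 V.
  case V2 : (sg x && ~~ sg y).
    move=> _; apply/Vp_cons => //; move/andP: V2 => [? ?]; split => //.
  rewrite Eop_invalid ?eqxx // Et Fx Fy !addbF V2 //.
move=> /(Vp_cons _ H) [sx sy V]; have Et := IH2 V.
rewrite Eop_valid //; last by rewrite Et Fy addbF.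
  rewrite /=; apply: funext => l; rewrite /maya_unset /maya_set Et /=.
  case: (eqVneq l x) => [->|lx]; first by rewrite sx.
  case: (eqVneq l y) => [->|ly]; first by rewrite (negbTE sy).
  by [].
by rewrite Et Fx addbF.
Qed.
End Alg.

Section Alg2.
Variable K : fieldType.
Variable t : K.
Hypothesis t0 : t != 0.

Lemma SW (tau : int -> bool) (M i : int) (n : nat) :
  (forall l, M < l -> ~~ tau l) -> M <= i + n%:Z ->
  sign_above t tau i = \prod_(k < n) (-t) ^+ tau (i + 1 + k%:Z).
Proof.
move=> HM Hn; rewrite /sign_above fsbig_mkcond (WL (a := i + 1) (n := n)).
  apply: eq_bigr => k _; rewrite /patch ifT //; rewrite in_setE /=; lia.
move=> l Hl; rewrite /patch; case: ifPn => // Hin.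
rewrite in_setE /= in Hin.
by rewrite (negbTE (HM l _)) ?expr0 //; lia.
Qed.

Lemma S_neq0 (tau : int -> bool) (M i : int) :
  (forall l, M < l -> ~~ tau l) -> sign_above t tau i != 0.
Proof.
move=> HM; rewrite (@SW tau M i `|M - i|%N HM); last lia.
by apply/prodf_neq0 => k _; rewrite expf_neq0 // oppr_eq0.
Qed.

Lemma Ssplit (tau : int -> bool) (M i j : int) :
  (forall l, M < l -> ~~ tau l) -> i < j ->
  sign_above t tau i =
  (\prod_(k < `|j - i|) (-t) ^+ tau (i + 1 + k%:Z)) * sign_above t tau j.
Proof.
move=> HM ij.
rewrite (@SW tau M i (`|j - i| + `|M - j|)%N HM); last lia.
rewrite (@SW tau M j `|M - j|%N HM); last lia.
rewrite big_split_ord /=; congr (_ * _); apply: eq_bigr => k _.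
congr (_ ^+ tau _); rewrite /=; lia.
Qed.

Lemma Sset (tau : int -> bool) j :
  sign_above t (maya_set tau j) j = sign_above t tau j.
Proof.
apply: eq_fsbigr => l; rewrite in_setE /= => jl.
by rewrite /maya_set; have -> : (l == j) = false by lia.
Qed.

Lemma Sratio (tau : int -> bool) (M i j : int) :
  (forall l, M < l -> ~~ tau l) -> i < j -> ~~ tau j ->
  sign_above t (maya_set tau j) i =
  (\prod_(k < `|j - i|.-1) (-t) ^+ tau (i + 1 + k%:Z)) * (-t) * sign_above t tau j.
Proof.
move=> HM ij tj.
have HM' : forall l, Num.max M j < l -> ~~ maya_set tau j l.
  move=> l Hl; rewrite /maya_set; have -> : (l == j) = false by lia.
  apply: HM; lia.
rewrite (Ssplit HM' ij) Sset.
have -> : `|j - i|%N = (`|j - i|.-1).+1 by lia.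
rewrite big_ord_recr /=; congr (_ * _ * _).
  apply: eq_bigr => k _; rewrite /maya_set /=.
  by have kl := ltn_ord k; have -> : (i + 1 + (k : nat)%:Z == j) = false by lia.
rewrite /maya_set; have -> : (i + 1 + (`|j - i|.-1)%:Z == j) = true by lia.
by rewrite expr1.
Qed.

Lemma key_prod (x : K) d (bs : nat -> bool) :
  (x * t) ^+ d * (\prod_(k < d) (-t) ^+ bs k)^-1 =
  \prod_(k < d) (if bs k then - x else t * x).
Proof.
elim: d => [|d IH]; first by rewrite !big_ord0 expr0 invr1 mulr1.
rewrite !big_ord_recr /= -IH exprSr invfM.
case: (bs d); rewrite ?expr1 ?expr0; field; try (apply/andP; split);
  try (apply/prodf_neq0 => k _; rewrite expf_neq0 // oppr_eq0);
  by rewrite ?oppr_eq0 ?oner_neq0.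
Qed.

Definition Om (x : K) := Omega 1 (- x) 1 (t * x) 1 ((t - 1) * x).

Lemma Hval (x : K) (sg : int -> bool) (i j l : int) : i < j -> sg i -> ~~ sg j ->
  Om x (hsf [:: (i,j)] (l-1)) (sg l) (hsf [:: (i,j)] l) (sg l (+) Ff [:: (i,j)] l) =
  if l == i then (t - 1) * x else if (i < l) && (l < j) then
    (if sg l then - x else t * x) else 1.
Proof.
move=> ij si sj; rewrite /hsf /Ff /= !orbF.
case: (eqVneq l i) => [->|li].
  have -> : (i <= i - 1) && (i - 1 < j) = false by lia.
  have -> : (i <= i) && (i < j) = true by lia.
  by rewrite si /Om /=.
case: (eqVneq l j) => [->|lj].
  have -> : (i <= j - 1) && (j - 1 < j) = true by lia.
  have -> : (i <= j) && (j < j) = false by lia.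
  have -> : (i < j) && (j < j) = false by lia.
  by rewrite ?orbT (negbTE sj) /Om /=.
have [lin|lout] := boolP ((i < l) && (l < j)).
  have -> : (i <= l - 1) && (l - 1 < j) = true by lia.
  have -> : (i <= l) && (l < j) = true by lia.
  by rewrite /Om /=; case: (sg l).
have -> : (i <= l - 1) && (l - 1 < j) = false by lia.
have -> : (i <= l) && (l < j) = false by lia.
by rewrite /Om /=; case: (sg l).
Qed.

Lemma Hprod (x : K) (sg : int -> bool) (i j : int) : i < j -> sg i -> ~~ sg j ->
  \big[*%R/1]_(l \in [set: int])
    Om x (hsf [:: (i,j)] (l-1)) (sg l) (hsf [:: (i,j)] l) (sg l (+) Ff [:: (i,j)] l)
  = (t - 1) * x * \prod_(k < `|j - i|.-1) (if sg (i + 1 + k%:Z) then - x else t * x).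
Proof.
move=> ij si sj.
rewrite (eq_fsbigr (fun l => if l == i then (t - 1) * x else if (i < l) && (l < j) then
    (if sg l then - x else t * x) else 1)); last by move=> l _; exact: Hval.
rewrite (WL (a := i) (n := (`|j - i|.-1).+2)); last first.
  move=> l Hl; have -> : (l == i) = false by lia.
  by have -> : (i < l) && (l < j) = false by lia.
rewrite big_ord_recl big_ord_recr /=.
have -> : (i + 0 == i) = true by lia.
have -> : (i + (`|j - i|.-1).+1%:Z == i) = false by lia.
have -> : (i < i + (`|j - i|.-1).+1%:Z) && (i + (`|j - i|.-1).+1%:Z < j) = false by lia.
rewrite mulr1; congr (_ * _); apply: eq_bigr => k _.
have := ltn_ord k => kl.
have -> : (i + (bump 0 k)%:Z == i) = false by rewrite /bump; lia.
have -> : (i < i + (bump 0 k)%:Z) && (i + (bump 0 k)%:Z < j) = true by rewrite /bump; lia.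
by have -> : i + (bump 0 k)%:Z = i + 1 + k%:Z by rewrite /bump; lia.
Qed.

End Alg2.

Lemma bnd s : exists lo hi : int, forall l, (l < lo) || (hi < l) ->
  hsf s l = false /\ Ff s l = false.
Proof.
elim: s => [|[u v] r [lo [hi IH]]]; first by exists 0, 0.
exists (Num.min lo (Num.min u v)), (Num.max hi (Num.max u v)) => l Hl.
have Hl' : (l < lo) || (hi < l) by lia.
have [h1 h2] := IH l Hl'.
rewrite hsf_cons Ff_cons /= h1 h2 !orbF; split; lia.
Qed.

Lemma H1 s (sg sg' : int -> bool) : interlaced s ->
  (forall l, vertex_allowed (hsf s (l-1)) (sg l) (hsf s l) (sg' l)) ->
  Vp s sg /\ sg' = (fun l => sg l (+) Ff s l).
Proof.
move=> Hi A; split.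
  by move=> l Fl; have := A l; rewrite VA BL // Fl => /andP[/eqP -> _].
apply: funext => l; have := A l; rewrite VA BL //; case: (Ff s l) => /=.
  by move=> /andP[_ /eqP ->]; rewrite addbT.
by move=> /eqP ->; rewrite addbF.
Qed.

Lemma H1c s (sg : int -> bool) : interlaced s -> Vp s sg ->
  forall l, vertex_allowed (hsf s (l-1)) (sg l) (hsf s l) (sg l (+) Ff s l).
Proof.
move=> Hi V l; rewrite VA BL //; case F: (Ff s l) => /=.
  by rewrite V // eqxx addbT eqxx.
by rewrite addbF eqxx.
Qed.

Lemma hsf_fin s : exists N : int, forall i, N < `|i| -> ~~ hsf s i.
Proof.
have [lo [hi H]] := bnd s; exists (`|lo| + `|hi|) => i Hi.
have Hl' : (i < lo) || (hi < i) by lia.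
by have [-> _] := H i Hl'.
Qed.

Section Alg3.
Variable K : fieldType.
Variable t : K.
Hypothesis t0 : t != 0.

Lemma Om_bnd (x : K) s (sg : int -> bool) : exists a b : int, forall l, (l < a) || (b < l) ->
  Om t x (hsf s (l-1)) (sg l) (hsf s l) (sg l (+) Ff s l) = 1.
Proof.
have [lo [hi H]] := bnd s; exists lo, (hi + 1) => l Hl.
have Hl1 : (l < lo) || (hi < l) by lia.
have Hl2 : (l - 1 < lo) || (hi < l - 1) by lia.
have [h1 f1] := H l Hl1.
have [h2 _] := H (l - 1) Hl2.
by rewrite h1 h2 f1 addbF /Om; case: (sg l).
Qed.

Lemma TW (x : K) s (sg : int -> bool) M : (forall l, M < l -> ~~ sg l) ->
  interlaced s -> Vp s sg ->
  (x * t) ^+ Eweight s * (Eprod t s (1, sg)).1 =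
  \big[*%R/1]_(l \in [set: int]) Om t x (hsf s (l-1)) (sg l) (hsf s l) (sg l (+) Ff s l).
Proof.
move=> HM; elim: s => [|[i j] r IH] H V.
  rewrite /Eweight big_nil expr0 mulr1 /= fsbig1 // => l _.
  by rewrite /Om; case: (sg l).
have [ij ir Hr] := il_inv H.
have [si sj Vr] := (Vp_cons t0 sg H).1 V.
have IHr := IH ir Vr.
have [_ EP2] := EP t0 sg ir.
have Et := EP2 Vr.
rewrite Eprod_cons; case E: (Eprod t r (1, sg)) => [c tau]; rewrite E /= in Et IHr.
have [_ Fi] := il_after H (ltW ij); have [_ Fj] := il_after H (lexx j).
have tj : ~~ tau j by rewrite Et Fj addbF.
rewrite Eop_valid //; first last.
- by rewrite Et Fi addbF.
- by rewrite neq_lt ij.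
have [lo [hi Hb]] := bnd r.
have HMt : forall l, Num.max M hi < l -> ~~ tau l.
  move=> l Hl; rewrite Et; have Hl' : (l < lo) || (hi < l) by lia.
  have [_ ->] := Hb l Hl'.
  by rewrite addbF; apply: HM; lia.
rewrite (Sratio t0 HMt ij tj) /=.
rewrite (eq_bigr (fun k : 'I_ _ => (-t) ^+ sg (i + 1 + (k : nat)%:Z))); last first.
  move=> k _; have kl := ltn_ord k; rewrite Et.
  have kj : i + 1 + (k : nat)%:Z <= j by lia.
  by have [_ ->] := il_after H kj; rewrite addbF.
rewrite (eq_fsbigr (fun l => Om t x (hsf r (l-1)) (sg l) (hsf r l) (sg l (+) Ff r l) *
    Om t x (hsf [:: (i,j)] (l-1)) (sg l) (hsf [:: (i,j)] l) (sg l (+) Ff [:: (i,j)] l))); last first.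
  move=> l _; have [lj|lj] := lerP l j.
    have [h1 f1] := il_after H lj.
    have lj1 : l - 1 <= j by lia.
    have [h2 _] := il_after H lj1.
    rewrite h1 h2 f1 /hsf /Ff /= !orbF addbF.
    by case: (sg l); rewrite /Om /= mul1r.
  have -> : hsf [:: (i, j)] (l - 1) = false by rewrite /hsf /=; lia.
  have -> : hsf [:: (i, j)] l = false by rewrite /hsf /=; lia.
  have -> : Ff [:: (i, j)] l = false by rewrite /Ff /=; lia.
  rewrite ?hsf_cons ?Ff_cons /=.
  have -> : (i <= l - 1) && (l - 1 < j) = false by lia.
  have -> : (i <= l) && (l < j) = false by lia.
  have -> : (l == i) || (l == j) = false by lia.
  by rewrite addbF /=; case: (sg l); rewrite mulr1.
have [a1 [b1 B1]] := Om_bnd x r sg.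
have [a2 [b2 B2]] := Om_bnd x [:: (i,j)] sg.
rewrite (fsZ_split B1 B2) -IHr (Hprod t0) //.
rewrite /Eweight big_cons /= -/(Eweight r) exprD.
have dE : `|j - i|%N = (`|j - i|.-1).+1 by lia.
set d := (`|j - i|.-1)%N in dE *.
rewrite dE -(key_prod t0 x d (fun k => sg (i + 1 + k%:Z))).
have S0 : sign_above t tau j != 0 by apply: (S_neq0 t0 j HMt).
have P0 : \prod_(k < `|j - i|.-1) (- t) ^+ sg (i + 1 + k%:Z) != 0.
  by apply/prodf_neq0 => k _; rewrite expf_neq0 // oppr_eq0.
move: S0 P0; rewrite exprS.
set S := sign_above t tau j.
set P := \prod_(k < _) _.
set A := (x * t) ^+ d.
set B := (x * t) ^+ Eweight r.
move=> S0 P0.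
field.
by rewrite S0 P0 oppr_eq0 t0.
Qed.

End Alg3.

Theorem proposition4p9 (K : fieldType) (x t : K) (t_neq0 : t != 0)
  (sigma sigma' : int -> bool) (hs : is_maya sigma) (hs' : is_maya sigma') :
  A_coef x t sigma' sigma =
  row_partition 1 (- x) 1 (t * x) 1 ((t - 1) * x) sigma sigma'.
Proof.
have [L [M [_ HM]]] := hs.
rewrite /A_coef /row_partition.
pose T := fun s => (x * t) ^+ Eweight s * pairing sigma' (Eprod t s (1, sigma)).
pose W := fun h : int -> bool => \big[ *%R/1]_(i \in [set: int])
        Omega 1 (- x) 1 (t * x) 1 ((t - 1) * x) (h (i - 1)) (sigma i) (h i) (sigma' i).
have K1 : forall s, interlaced s -> T s != 0 -> row_config sigma sigma' (hsf s).
  move=> s Hi; rewrite /T /pairing; case: asboolP => [E|_]; last by rewrite mulr0 eqxx.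
  have [->|c0] := eqVneq (Eprod t s (1, sigma)).1 0; first by rewrite mulr0 eqxx.
  move=> _; have [EP1 EP2] := EP t_neq0 sigma Hi.
  have V := EP1 c0; have E2 := EP2 V; rewrite E2 in E; subst sigma'.
  by split; [exact: hsf_fin | exact: H1c].
have K2 : forall s, interlaced s -> row_config sigma sigma' (hsf s) -> T s = W (hsf s).
  move=> s Hi [_ A]; have [V E] := H1 Hi A.
  have [_ EP2] := EP t_neq0 sigma Hi; have E2 := EP2 V.
  rewrite /T /pairing asboolT; last by rewrite E2 E.
  by rewrite (TW t_neq0 x HM Hi V) /W E.
have [E|NE] := pselect (sigma' = sigma).
  subst sigma'.
  rewrite /pairing asboolT //= fsbig1; last first.
    move=> s [sn Hi]; apply/eqP; apply: contraT => /(K1 _ Hi) [_ A].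
    have [_ E] := H1 Hi A.
    case: s sn Hi A E => [//|[u v] r] _ _ _ E.
    have := congr1 (fun f => f u) E => /=; rewrite eqxx /=.
    by case: (sigma u).
  rewrite (_ : [set h | row_config sigma sigma h] = [set (fun _ => false)]).
    rewrite fsbig_set1 fsbig1 ?addr0 // => l _.
    by case: (sigma l).
  apply/seteqP; split => h /=.
    move=> Rh; have [s [Hi Es]] := row_surj Rh; subst h.
    case: Rh => _ A; have [_ E] := H1 Hi A.
    case: s Hi A E => [//|[u v] r] _ _ E.
    have := congr1 (fun f => f u) E => /=; rewrite eqxx /=.
    by case: (sigma u).
  move=> ->; split; first by exists 0.
  by move=> l; case: (sigma l).
rewrite /pairing asboolF; last by move=> /= e; apply: NE.
rewrite add0r.
pose J' := [set s | (s != [::] /\ interlaced s) /\ row_config sigma sigma' (hsf s)].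
have S1 : \sum_(s \in [set s | s != [::] /\ interlaced s]) T s = \sum_(s \in J') T s.
  apply/esym/fsbig_widen.
    by move=> s [].
  move=> s [[sn Hi] nJ] /=; apply/eqP; apply: contraT => /(K1 _ Hi) R.
  by exfalso; apply: nJ.
have S2 : \sum_(s \in J') T s = \sum_(s \in J') W (hsf s).
  by apply: eq_fsbigr => s; rewrite in_setE => -[[_ Hi] R]; exact: K2.
have S3 : \sum_(h \in hsf @` J') W h = \sum_(s \in J') W (hsf s).
  apply: fsbig_image => a b; rewrite !in_setE => -[[_ Ha] _] [[_ Hb] _] E.
  by apply: hsf_inj => // l; rewrite E.
have S4 : hsf @` J' = [set h | row_config sigma sigma' h].
  apply/seteqP; split.
    by move=> _ [s [[_ Hi] R] <-].
  move=> h /= Rh; have [s [Hi Es]] := row_surj Rh.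
  exists s => //; split => //; last by rewrite Es.
  split => //; apply/eqP => s0; subst s h.
  apply: NE; case: Rh => _ A; apply: funext => l.
  by have := A l; rewrite VA /= => /eqP.
transitivity (\sum_(s \in J') T s); first exact: S1.
by rewrite S2 -S3 S4.
Qed.
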